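(* In the (heterogeneous) UAV Persistent Service model with parameters $f>0$, $c\ge0$ and displacement times $g_1,\dots,g_N>0$ satisfying $2g_i<f$, every feasible schedule (one keeping all $N$ locations covered at all times $t\ge0$) uses at least $$M_{LB}=N+\left\lceil\sum_{i=1}^N\frac{c+2g_i}{f-2g_i}\right\rceil$$ UAVs.
   Context: UAV Persistent Service model: there is a single recharging station (RS) and a finite set of $N$ aerial locations, served by identical UAVs. A UAV with a full battery can fly for at most $f$ time units; replacing/recharging its battery at the RS takes $c$ time units. Flying between the RS and location $i$ (either direction) takes $g_i$ time units. A UAV's activity consists of sorties: it leaves the RS fully charged, flies to one location, stays there (covering it), and flies back to the RS, with total airborne time of the sortie at most $f$; it then spends $c$ time units recharging at the RS (possibly followed by idle time) before its next sortie. At time $0$ each UAV is fully charged, either at the RS or at a location. A location is covered at time $t$ if some UAV is present at it at time $t$. A schedule is feasible if every location is covered at every time $t\ge0$. *)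

(* Defs.v *)
From mathcomp Require Import all_boot all_order all_algebra.
From mathcomp Require Import reals.
Set Implicit Arguments. Unset Strict Implicit. Unset Printing Implicit Defensive.
Import Order.TTheory GRing.Theory Num.Theory.
Local Open Scope ring_scope.

Section UAV.
Variables (R : realType) (N : nat).

(* A sortie: departs the RS at time s_dep, flies to location s_loc
   (arriving at s_dep + g s_loc), stays there until s_leave, then flies
   back (arriving at the RS at s_leave + g s_loc). *)
Record sortie := Sortie { s_loc : 'I_N; s_dep : R; s_leave : R }.

(* The activity of a single UAV.
   p_init = None    : fully charged at the RS at time 0;
   p_init = Some i  : fully charged at location i at time 0, stays there
                      until p_init_leave, then flies back to the RS.
   p_sorties j      : the j-th (subsequent) sortie, None if the UAV performs
                      fewer than j+1 further sorties. *)
Record plan := Plan {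
  p_init : option 'I_N;
  p_init_leave : R;
  p_sorties : nat -> option sortie }.

Variables (f c : R) (g : 'I_N -> R).

Definition s_arrive (s : sortie) : R := s_dep s + g (s_loc s).
Definition s_return (s : sortie) : R := s_leave s + g (s_loc s).

Definition valid_sortie (s : sortie) : Prop :=
  s_arrive s <= s_leave s /\ s_return s - s_dep s <= f.

Definition first_avail (p : plan) : R :=
  match p_init p with
  | None => 0
  | Some i => p_init_leave p + g i + c
  end.

Definition valid_plan (p : plan) : Prop :=
  (forall i, p_init p = Some i ->
     0 <= p_init_leave p /\ p_init_leave p + g i <= f) /\
  (forall j s, p_sorties p j = Some s -> valid_sortie s) /\
  (forall s, p_sorties p 0 = Some s -> first_avail p <= s_dep s) /\
  (forall j s, p_sorties p j.+1 = Some s ->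
     exists s', p_sorties p j = Some s' /\ s_return s' + c <= s_dep s).

Definition present (p : plan) (i : 'I_N) (t : R) : Prop :=
  (p_init p = Some i /\ 0 <= t <= p_init_leave p) \/
  (exists j s, p_sorties p j = Some s /\ s_loc s = i /\
     s_arrive s <= t <= s_leave s).

Definition feasible (M : nat) (sched : 'I_M -> plan) : Prop :=
  (forall k, valid_plan (sched k)) /\
  (forall (i : 'I_N) (t : R), 0 <= t -> exists k : 'I_M, present (sched k) i t).

End UAV.

(* Main.v *)
From mathcomp Require Import all_boot all_order all_algebra.
From mathcomp Require Import reals lra ring.
Require Import Defs.
Import Order.TTheory GRing.Theory Num.Theory.
Local Open Scope ring_scope.

Lemma cover_lemma (R : realType) (I : eqType) (a b : I -> R) (s : seq I) (x T : R) :
  (forall j, j \in s -> a j <= b j) ->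
  (forall t, x <= t <= T -> exists2 j, j \in s & a j <= t <= b j) ->
  T - x <= \sum_(j <- s) (b j - a j).
Proof.
move=> Hab Hc; move: Hab Hc.
move: {2}(size s) (leqnn (size s)) => n.
elim: n s x => [|n IH] s x Hn Hab Hc.
- move: Hn; rewrite leqn0 size_eq0 => /eqP Hs; subst s.
  rewrite big_nil; case: (lerP x T) => hxT; last by rewrite subr_le0 ltW.
  have := Hc x; rewrite lexx hxT => /(_ isT) [j].
  by rewrite in_nil.
have Hpos : 0 <= \sum_(j <- s) (b j - a j).
  by rewrite big_seq sumr_ge0 // => j /Hab; rewrite subr_ge0.
case: (lerP x T) => hxT; last by apply: le_trans Hpos; rewrite subr_le0 ltW.
have := Hc x; rewrite lexx hxT => /(_ isT) [j0 j0s /andP [h1 h2]].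
have -> : \sum_(j <- s) (b j - a j) = (b j0 - a j0) + \sum_(j <- rem j0 s) (b j - a j)
  by rewrite (perm_big _ (perm_to_rem j0s)) big_cons.
case: (lerP T (b j0)) => hb.
  have : 0 <= \sum_(j <- rem j0 s) (b j - a j).
    by rewrite big_seq sumr_ge0 // => j /mem_rem /Hab; rewrite subr_ge0.
  move=> H; lra.
suff H : T - b j0 <= \sum_(j <- rem j0 s) (b j - a j) by lra.
apply/ler_addgt0Pr => e e0.
rewrite -lerBlDr -addrA -opprD.
apply: IH.
- by rewrite size_rem // -ltnS (leq_trans _ Hn) // prednK // lt0n size_eq0; case: (s) j0s.
- by move=> j /mem_rem /Hab.
move=> t /andP [t1 t2].
have := Hc t; rewrite t2 andbT => /(_ ltac:(lra)) [j js /andP [ja jb]].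
exists j => //; last by rewrite ja jb.
apply: rem_mem => //; apply/eqP => ej; subst j; lra.
Qed.

Section P.
Variables (R : realType) (N : nat) (f c : R) (g : 'I_N -> R).
Hypotheses (f0 : 0 < f) (c0 : 0 <= c) (g0 : forall i, 0 < g i) (gf : forall i, 2 * g i < f).

Definition r i := (c + 2 * g i) / (f - 2 * g i).
Definition w i := 1 + r i.

Lemma r_ge0 i : 0 <= r i.
Proof. have h1 := g0 i; have h2 := gf i; rewrite /r divr_ge0 //. all: have := c0; lra. Qed.

Lemma w_ge0 i : 0 <= w i.
Proof. have := r_ge0 i; rewrite /w; lra. Qed.

Lemma w_bound i L : 0 <= L -> L <= f - 2 * g i -> w i * L <= L + 2 * g i + c.
Proof.
move=> L0 Lf; have := gf i => gfi.
have : r i * L <= r i * (f - 2 * g i) by rewrite ler_wpM2l // r_ge0.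
have -> : r i * (f - 2 * g i) = c + 2 * g i.
  rewrite /r mulfVK //; apply/eqP => /eqP; rewrite subr_eq0 => /eqP H; move: gfi; rewrite H; lra.
rewrite /w mulrDl mul1r; move: L0 Lf; lra.
Qed.

Definition act (p : plan R N) (T : R) (i : 'I_N) (n : nat) : bool :=
  match n with
  | 0 => p_init p == Some i
  | j.+1 => match p_sorties p j with
            | Some s => (s_loc s == i) && (s_dep s <= T)
            | None => false end
  end.
Definition lo (p : plan R N) (n : nat) : R :=
  match n with
  | 0 => 0
  | j.+1 => match p_sorties p j with Some s => s_arrive g s | None => 0 end
  end.
Definition hi (p : plan R N) (n : nat) : R :=
  match n with
  | 0 => p_init_leave p
  | j.+1 => match p_sorties p j with Some s => s_leave s | None => 0 end
  end.
Definition wl (p : plan R N) (T : R) (n : nat) : R :=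
  match n with
  | 0 => match p_init p with Some i => w i * p_init_leave p | None => 0 end
  | j.+1 => match p_sorties p j with
            | Some s => if s_dep s <= T then w (s_loc s) * (s_leave s - s_arrive g s) else 0
            | None => 0 end
  end.

Lemma sum_pick (i0 : 'I_N) (F : 'I_N -> R) (P : 'I_N -> bool) :
  (forall i, P i = (i == i0)) -> \sum_i (if P i then F i else 0) = F i0.
Proof.
move=> HP; rewrite (bigD1 i0) //= HP eqxx big1 ?addr0 // => i /negbTE ne.
by rewrite HP ne.
Qed.

Lemma swap p T n :
  \sum_i w i * (if act p T i n then hi p n - lo p n else 0) = wl p T n.
Proof.
under eq_bigr => i _ do rewrite (fun_if ( *%R (w i))) mulr0.
case: n => [|j] /=.
  case: (p_init p) => [i0|].
    rewrite subr0; apply: (sum_pick _ (fun i => w i * p_init_leave p)) => i.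
    by rewrite eq_sym.
  by rewrite big1.
case: (p_sorties p j) => [s|]; last by rewrite big1.
case: ifP => hT.
  by apply: (sum_pick _ (fun i => w i * (s_leave s - s_arrive g s))) => i; rewrite andbT eq_sym.
by apply: big1 => i _; rewrite andbF.
Qed.

Definition phi (p : plan R N) (T : R) (j : nat) : R :=
  match p_sorties p j with
  | Some s => if s_dep s <= T then s_return g s + c - s_dep s else 0
  | None => 0 end.

Lemma fa_bounds p : valid_plan f c g p -> 0 <= first_avail c g p <= f + c.
Proof.
case=> Hi _; rewrite /first_avail; case E: (p_init p) => [i|]; last by move: f0 c0; lra.
have [h1 h2] := Hi i E; have := g0 i; move: c0; lra.
Qed.

Lemma inv p T : valid_plan f c g p -> 0 <= T -> forall n,
  \sum_(j < n) phi p T j <= T + f + c - first_avail c g p /\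
  (forall s, p_sorties p n = Some s -> \sum_(j < n) phi p T j <= s_dep s - first_avail c g p).
Proof.
move=> vp T0; have /andP [fa1 fa2] := fa_bounds p vp.
case: vp => [Hi [Hs [H0 Hc]]].
elim => [|n [IH1 IH2]].
  rewrite big_ord0; split; first by move: fa2 T0; lra.
  by move=> s /H0; lra.
rewrite big_ord_recr /= /phi.
case E: (p_sorties p n) => [s0|]; last first.
  rewrite addr0; split => // s /Hc [s' [E' _]]; by rewrite E in E'.
have [va vr] := Hs _ _ E; move: va vr; rewrite /s_arrive /s_return => va vr.
have I2 := IH2 _ E; have gs := g0 (s_loc s0).
case: ifP => hT.
  split; first by move: I2 vr hT; lra.
  move=> s /Hc [s' [E' Hr]]; rewrite E in E'; case: E' => ?; subst s'.
  move: Hr I2; rewrite /s_return; lra.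
rewrite addr0; split => // s /Hc [s' [E' Hr]]; rewrite E in E'; case: E' => ?; subst s'.
move: Hr I2 va gs c0; rewrite /s_return; lra.
Qed.

Definition W := \sum_i w i.
Definition K := W * f + f + c.

Lemma uav_bound p T J : valid_plan f c g p -> 0 <= T ->
  \sum_(n < J.+1) wl p T n <= T + K.
Proof.
move=> vp T0; have /andP [fa1 fa2] := fa_bounds p vp.
have [h3 _] := inv p T vp T0 J.
have h1 : wl p T 0 <= W * f.
  rewrite /=; case E: (p_init p) => [i|]; last by apply: mulr_ge0; [apply: sumr_ge0 => k _; apply: w_ge0 | apply: ltW].
  case: vp => Hi _; have [l1 l2] := Hi i E; have gi := g0 i.
  apply: (@le_trans _ _ (w i * f)); first by rewrite ler_wpM2l ?w_ge0 //; move: l1 l2 gi; lra.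
  apply: ler_wpM2r; first exact: ltW.
  rewrite /W (bigD1 i) //= lerDl; apply: sumr_ge0 => k _; apply: w_ge0.
have h2 : \sum_(j < J) wl p T (lift ord0 j) <= \sum_(j < J) phi p T j.
  apply: ler_sum => j _; rewrite lift0 /= /phi.
  case E: (p_sorties p j) => [s|] //; case: ifP => // _.
  case: vp => _ [Hs _]; have [va vr] := Hs _ _ E; rewrite /s_arrive /s_return in va vr *.
  have H := w_bound (s_loc s) (s_leave s - (s_dep s + g (s_loc s))).
  apply: le_trans (H _ _) _; move: va vr; lra.
rewrite big_ord_recl; rewrite /K; move: h1 h2 h3 fa1; lra.
Qed.

Lemma ex_delta : exists d, 0 < d /\ forall i, d <= 2 * g i + c.
Proof.
set S := \sum_i (2 * g i + c)^-1.
have S0 : 0 <= S by apply: sumr_ge0 => i _; rewrite invr_ge0; have := g0 i; move: c0; lra.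
exists (1 + S)^-1; split; first by rewrite invr_gt0; move: S0; lra.
move=> i; have xi : 0 < 2 * g i + c by have := g0 i; move: c0; lra.
rewrite -[X in _ <= X]invrK lef_pV2 ?posrE ?invr_gt0 //; last by move: S0; lra.
rewrite /S (bigD1 i) //=.
have : 0 <= \sum_(j < N | j != i) (2 * g j + c)^-1.
  by apply: sumr_ge0 => j _; rewrite invr_ge0; have := g0 j; move: c0; lra.
lra.
Qed.

Lemma dep_lb p d : valid_plan f c g p -> (forall i, d <= 2 * g i + c) ->
  forall j s, p_sorties p j = Some s -> j%:R * d <= s_dep s.
Proof.
move=> vp hd; have /andP [fa1 _] := fa_bounds p vp.
case: vp => _ [Hs [H0 Hc]].
elim => [|j IH] s E.
  by rewrite mul0r; apply: le_trans fa1 (H0 _ E).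
have [s' [E' Hr]] := Hc _ _ E.
have [va _] := Hs _ _ E'; have := IH _ E'; have := hd (s_loc s').
rewrite /s_arrive /s_return in va Hr *.
rewrite -natr1 mulrDl mul1r; move: va Hr; lra.
Qed.

Lemma key M (sched : 'I_M -> plan R N) : feasible f c g sched -> forall T, 0 <= T ->
  T * (N%:R + \sum_i r i) <= M%:R * (T + K).
Proof.
move=> [Hv Hcov] T T0.
have [d [d0 hd]] := ex_delta.
set J := Num.Def.archi_bound (T / d).
have HJ : T / d < J%:R by apply: archi_boundP; rewrite divr_ge0 // ltW.
have cov i : T <= \sum_(k < M) \sum_(n < J.+1)
    (if act (sched k) T i n then hi (sched k) n - lo (sched k) n else 0).
  set P := [pred x : 'I_M * 'I_J.+1 | act (sched x.1) T i x.2].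
  have := @cover_lemma R _ (fun x : 'I_M * 'I_J.+1 => lo (sched x.1) x.2) (fun x : 'I_M * 'I_J.+1 => hi (sched x.1) x.2) (enum P) 0 T _ _.
  rewrite subr0 big_enum /= pair_big /= => H.
  have H1 : forall x : 'I_M * 'I_J.+1, x \in enum P -> lo (sched x.1) x.2 <= hi (sched x.1) x.2.
    move=> [k n]; rewrite mem_enum inE /=.
    have [Hi [Hs _]] := Hv k.
    case: n => [[|j] nJ] /=.
      by move/eqP => E; have [] := Hi _ E.
    case E: (p_sorties (sched k) j) => [s|] // _.
    by have [] := Hs _ _ E.
  have H2 : forall t, 0 <= t <= T -> exists2 x : 'I_M * 'I_J.+1, x \in enum P &
      lo (sched x.1) x.2 <= t <= hi (sched x.1) x.2.
    move=> t /andP [t0 tT]; have [k [[E tt]|[j [s [E [Ls ts]]]]]] := Hcov i t t0.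
      by exists (k, ord0); rewrite ?mem_enum ?inE //= E.
    have Hd := @dep_lb (sched k) d (Hv k) hd j s E.
    move: ts => /andP [ts1 ts2].
    have jJ : (j < J)%N.
      rewrite -(ltr_nat R); apply: le_lt_trans HJ.
      rewrite ler_pdivlMr //; apply: le_trans Hd _.
      have [va _] := (Hv k).2.1 _ _ E; move: va ts1 tT; rewrite /s_arrive.
      have := g0 (s_loc s); lra.
    exists (k, Ordinal (jJ : (j.+1 < J.+1)%N)); rewrite ?mem_enum ?inE //= E.
    rewrite Ls eqxx /=.
    move: ts1 tT; have := g0 (s_loc s); rewrite /s_arrive; lra.
    by apply/andP.
  apply: le_trans (H H1 H2) _.
  rewrite big_mkcond; apply: ler_sum => x _; by rewrite inE.
have Hsum : \sum_(i < N) w i * T <= \sum_(i < N) w i * (\sum_(k < M) \sum_(n < J.+1)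
    (if act (sched k) T i n then hi (sched k) n - lo (sched k) n else 0)).
  by apply: ler_sum => i _; rewrite ler_wpM2l ?w_ge0 ?cov.
have E1 : \sum_i w i * (\sum_(k < M) \sum_(n < J.+1)
    (if act (sched k) T i n then hi (sched k) n - lo (sched k) n else 0)) =
    \sum_(k < M) \sum_(n < J.+1) wl (sched k) T n.
  under eq_bigr => i _ do rewrite mulr_sumr.
  rewrite exchange_big /=; apply: eq_bigr => k _.
  under eq_bigr => i _ do rewrite mulr_sumr.
  rewrite exchange_big /=; apply: eq_bigr => n _.
  exact: swap.
rewrite E1 in Hsum.
have E2 : \sum_(i < N) w i * T = T * (N%:R + \sum_i r i).
  rewrite -mulr_suml mulrC /w big_split /= sumr_const card_ord.
  by rewrite -[X in X *+ _]/(1 : R).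
rewrite E2 in Hsum; apply: le_trans Hsum _.
have : \sum_(k < M) \sum_(n < J.+1) wl (sched k) T n <= \sum_(k < M) (T + K).
  by apply: ler_sum => k _; apply: uav_bound.
by rewrite sumr_const card_ord mulr_natl.
Qed.
End P.

Theorem theorem4 (R : realType) (N : nat) (f c : R) (g : 'I_N -> R)
  (M : nat) (sched : 'I_M -> plan R N) :
  0 < f -> 0 <= c -> (forall i, 0 < g i) -> (forall i, 2 * g i < f) ->
  feasible f c g sched ->
  (N%:Z + Num.ceil (\sum_(i < N) (c + 2 * g i) / (f - 2 * g i)) <= M%:Z)%R.
Proof.
move=> f0 c0 g0 gf Hf.
have key' := @key R N f c g f0 c0 g0 gf M sched Hf.
set S := \sum_(i < N) (c + 2 * g i) / (f - 2 * g i).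
have K0 : 0 <= @K R N f c g.
  rewrite /K; have : 0 <= @W R N f c g * f.
    apply: mulr_ge0; last exact: ltW.
    by apply: sumr_ge0 => i _; apply: w_ge0.
  move: f0 c0; lra.
have HNS : N%:R + S <= M%:R.
  rewrite leNgt; apply/negP => Hlt.
  set D := N%:R + S - M%:R.
  have D0 : 0 < D by rewrite /D; move: Hlt; lra.
  set T := M%:R * @K R N f c g / D + 1.
  have T1 : 0 <= M%:R * @K R N f c g / D.
    by apply: divr_ge0; [apply: mulr_ge0 | apply: ltW].
  have T0 : 0 <= T by rewrite /T; move: T1; lra.
  have H : T * (N%:R + S) <= M%:R * (T + @K R N f c g) := key' T T0.
  have E1 : T * D = T * (N%:R + S) - M%:R * T by rewrite /D; ring.
  have E2 : T * D = M%:R * @K R N f c g + D by rewrite /T mulrDl divfK ?mul1r // gt_eqF.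
  have : M%:R * (T + @K R N f c g) = M%:R * T + M%:R * @K R N f c g by ring.
  clearbody T D; move: H E1 E2 D0. lra.
rewrite addrC -lerBrDr ceil_le_int rmorphB /=.
move: HNS; lra.
Qed.
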